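(* Suppose $n\geq 4$ and $1\leq d\leq n-1$, and let $N=|\Omega_{n,d}|$. The smallest eigenvalue $\lambda_{N-1}$ of the transition matrix of the switch chain on $\Omega_{n,d}$ satisfies \[ (1+\lambda_{N-1})^{-1}\leq \tfrac14\, d^2n^2. \]
   Context: $\Omega_{n,d}$ is the set of simple digraphs on $[n]$ in which every vertex has in-degree and out-degree $d$. The switch chain: from $G$, choose an unordered pair of distinct arcs $\{(i,j),(k,\ell)\}$ uniformly at random; if $|\{i,j,k,\ell\}|=4$ and neither $(i,\ell)$ nor $(k,j)$ is an arc of $G$, replace $(i,j),(k,\ell)$ by $(i,\ell),(k,j)$; otherwise stay at $G$. Its transition matrix is symmetric, with real eigenvalues $1=\lambda_0>\lambda_1\geq\cdots\geq\lambda_{N-1}\geq-1$. *)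

(* Defs.v *)
From HB Require Import structures.
From mathcomp Require Import all_boot all_order all_algebra.
Set Implicit Arguments. Unset Strict Implicit. Unset Printing Implicit Defensive.
Import Order.TTheory GRing.Theory Num.Theory.

Definition arc (n : nat) := ('I_n * 'I_n)%type.

(* Simple digraph (no loops; no multiple arcs, automatic for sets) in which
   every vertex has out-degree d and in-degree d. *)
Definition is_regdigraph (n d : nat) (G : {set arc n}) : bool :=
  [&& [forall v : 'I_n, (v, v) \notin G],
      [forall v : 'I_n, #|[set w : 'I_n | (v, w) \in G]| == d] &
      [forall v : 'I_n, #|[set u : 'I_n | (u, v) \in G]| == d]].
Arguments is_regdigraph : clear implicits.

Notation Omega n d := {G : {set arc n} | is_regdigraph n d G}.

Definition switch (n : nat) (G : {set arc n}) (a b : arc n) : {set arc n} :=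
  let: (i, j) := a in let: (k, l) := b in
  if [&& uniq [:: i; j; k; l], (i, l) \notin G & (k, j) \notin G]
  then ((G :\ a) :\ b) :|: [set (i, l); (k, j)]
  else G.

(* Number of ordered pairs (a,b) of distinct arcs of G whose switch gives H.
   Since the switch is symmetric in (a,b), this is twice the number of
   unordered pairs {a,b} leading from G to H. *)
Definition nswitch (n : nat) (G H : {set arc n}) : nat :=
  #|[set ab : arc n * arc n |
      [&& ab.1 \in G, ab.2 \in G, ab.1 != ab.2 & switch G ab.1 ab.2 == H]]|.

(* Each G in Omega has m = d*n arcs; an unordered pair of distinct arcs is
   chosen uniformly among 'C(m,2) = m(m-1)/2 pairs, i.e. probability
   (#ordered pairs)/(m(m-1)). *)
Definition switch_mx (R : numFieldType) (n d : nat) : 'M[R]_#|{: Omega n d}| :=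
  \matrix_(i, j)
    ((nswitch (val (enum_val i)) (val (enum_val j)))%:R
       / ((d * n) * (d * n).-1)%:R)%R.
Arguments switch_mx : clear implicits.

(* Main.v *)
From Pilot Require Import Defs.
From HB Require Import structures.
From mathcomp Require Import all_boot all_order all_algebra lra zify.
Set Implicit Arguments. Unset Strict Implicit. Unset Printing Implicit Defensive.
Import Order.TTheory GRing.Theory Num.Theory.
Import Pilot.Defs.

Lemma card_G n d (G : {set arc n}) : is_regdigraph n d G -> #|G| = (d * n)%N.
Proof.
case/and3P=> _ /forallP Hout _.
rewrite -sum1_card big_mkcond /=.
transitivity (\sum_(p : 'I_n * 'I_n) (fun v w => if (v, w) \in G then 1%N else 0%N) p.1 p.2)%N.
  by apply: eq_bigr => -[v w].
rewrite -(pair_big xpredT xpredT (fun v w => if (v, w) \in G then 1%N else 0%N)) /=.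
transitivity (\sum_(v : 'I_n) d)%N; last by rewrite sum_nat_const card_ord mulnC.
apply: eq_bigr => v _.
rewrite -(eqP (Hout v)) -sum1_card [RHS]big_mkcond /=; apply: eq_bigr => w _.
by rewrite inE.
Qed.

Lemma sum_nswitch n d (G : {set arc n}) :
  (\sum_(H : Omega n d) nswitch G (val H) <= #|G| * (#|G|).-1)%N.
Proof.
pose T ab := [&& ab.1 \in G, ab.2 \in G & ab.1 != ab.2].
have -> : (\sum_(H : Omega n d) nswitch G (val H) =
   \sum_(H : Omega n d) \sum_(ab : arc n * arc n)
      (if T ab && (switch G ab.1 ab.2 == val H) then 1 else 0))%N.
  apply: eq_bigr => H _; rewrite /nswitch -sum1_card big_mkcond /=.
  by apply: eq_bigr => ab _; rewrite inE /T -!andbA.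
rewrite exchange_big /=.
apply: (@leq_trans (\sum_(ab : arc n * arc n) (T ab : nat))).
  apply: leq_sum => ab _.
  case: (T ab) => /=; last by rewrite big1.
  case: (pickP (fun H : Omega n d => val H == switch G ab.1 ab.2)) => [H0 /eqP E | N0].
    have E' : switch G ab.1 ab.2 = sval H0 := esym E.
    rewrite (bigD1 H0) //= E' eqxx big1 // => H HH.
    by rewrite (inj_eq val_inj) eq_sym (negbTE HH).
  by rewrite big1 // => H _; rewrite eq_sym N0.
have -> : (\sum_(ab : arc n * arc n) (T ab : nat) = \sum_(p : arc n * arc n) (fun a b => (T (a, b) : nat)) p.1 p.2)%N.
  by apply: eq_bigr => -[a b].
rewrite -(pair_big xpredT xpredT (fun a b => (T (a, b) : nat))) /=.
rewrite (bigID (fun a => a \in G)) /= [X in (_ + X)%N]big1; last first.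
  by move=> a /negbTE aG; rewrite big1 // => b _; rewrite /T /= aG.
rewrite addn0 -sum_nat_const; apply: eq_leq.
apply: eq_bigr => a aG.
rewrite (cardsD1 a G) aG add1n /= -sum1_card [RHS]big_mkcond /=; apply: eq_bigr => b _.
by rewrite /T /= aG !inE eq_sym; case: (b == a); case: (b \in G).
Qed.

Lemma nswitch_self n d (G : {set arc n}) : (0 < n)%N -> (1 <= d)%N ->
  is_regdigraph n d G -> (2 <= nswitch G G)%N.
Proof.
move=> n0 d1 /and3P [/forallP Hl /forallP Hout _].
pose v0 : 'I_n := Ordinal n0.
have [j] : exists j, j \in [set w | (v0, w) \in G].
  by apply/set0Pn; rewrite -card_gt0 (eqP (Hout v0)).
rewrite inE => Hj.
have jv : j != v0 by apply: contraNneq (Hl v0) => E; rewrite -{2}E.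
have [k] : exists k, k \in [set w | (j, w) \in G].
  by apply/set0Pn; rewrite -card_gt0 (eqP (Hout j)).
rewrite inE => Hk.
have ne : (v0, j) != (j, k) by rewrite xpair_eqE negb_and eq_sym jv.
have -> : 2%N = #|[set ((v0, j), (j, k)); ((j, k), (v0, j))]|.
  by rewrite cards2 xpair_eqE negb_and ne.
apply: subset_leq_card; apply/subsetP => x; rewrite !inE => /orP [] /eqP -> /=.
  by rewrite Hj Hk ne /switch /= !inE !eqxx /= !andbF /=.
by rewrite Hj Hk eq_sym ne /switch /= !inE !eqxx /= ?orbT ?andbF /=.
Qed.
Local Open Scope ring_scope.

Lemma gersh (R : realFieldType) N (P : 'M[R]_N) (w : 'rV[R]_N) lam :
  w != 0 -> w *m P^T = lam *: w -> (forall i j, 0 <= P i j) ->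
  exists i, P i i - \sum_(j | j != i) P i j <= lam.
Proof.
move=> wn0 Hw Hpos.
have [i0 Hi0] : exists i0, w 0 i0 != 0.
  apply/existsP; apply: contraR wn0 => /existsPn H; apply/eqP/rowP => j.
  by rewrite mxE; apply/eqP/negbNE/H.
case: (@arg_maxP _ _ _ i0 xpredT (fun j => `|w 0 j|) isT) => i _ Hmax.
exists i.
set a := w 0 i.
have Hm j : `|w 0 j| <= `|a| := Hmax j isT.
have an0 : a != 0.
  apply: contraNneq Hi0 => a0; rewrite -normr_eq0 eq_le normr_ge0 andbT.
  by have := Hm i0; rewrite a0 normr0.
have E : lam * a = \sum_j w 0 j * P i j.
  move/matrixP: Hw => /(_ 0 i); rewrite !mxE /= => <-.
  by apply: eq_bigr => j _; rewrite mxE.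
have a2 : 0 < a * a by rewrite -expr2 exprn_even_gt0.
rewrite -(ler_pM2r a2) [lam * _]mulrA E mulr_suml [X in _ <= X](bigD1 i) //= mulrBl mulr_suml.
apply: lerD; first by rewrite mulrA [w 0 i * _]mulrC.
rewrite -sumrN; apply: ler_sum => j _.
have h1 : `|w 0 j * a| <= a * a.
  rewrite -[a * a]ger0_norm; last exact: ltW a2.
  rewrite !normrM; apply: ler_wpM2r; [exact: normr_ge0 | exact: Hm].
move: h1; rewrite ler_norml => /andP [h1 _].
rewrite -mulrN -mulrA mulrC [P i j * a]mulrC mulrA; apply: ler_wpM2r; first exact: Hpos.
by rewrite mulrC.
Qed.

Theorem mainTheorem7 (R : rcfType) (n d : nat) :
  (4 <= n)%N -> (1 <= d <= n - 1)%N ->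
  forall lambda : R, eigenvalue (switch_mx R n d) lambda ->
    0 < 1 + lambda /\ (1 + lambda)^-1 <= (d ^ 2 * n ^ 2)%:R / 4%:R.
Proof.
move=> n4 /andP [d1 _] lam /eigenvalueP [v Hv vn0].
set P := switch_mx R n d.
have Hdet : \det (lam%:M - P) == 0.
  apply/det0P; exists v => //.
  by rewrite mulmxBr Hv mul_mx_scalar subrr.
have Hdet' : \det (lam%:M - P^T) == 0.
  by rewrite -det_tr linearB /= tr_scalar_mx trmxK.
case/det0P: Hdet' => w wn0 Hw.
have Hw' : w *m P^T = lam *: w.
  by apply/eqP; rewrite -mul_mx_scalar eq_sym -subr_eq0 -mulmxBr Hw.
set m := (d * n)%N.
have m4 : (4 <= m)%N by rewrite /m; apply: leq_trans n4 _; rewrite leq_pmull.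
set Mn := (m * m.-1)%N.
have Mn0 : (0 < Mn)%N by rewrite /Mn; move: m4; clearbody m; clear; move=> m4; rewrite muln_gt0; apply/andP; split; lia.
have MR : (0 : R) < Mn%:R by rewrite ltr0n.
have Pij i j : P i j = (nswitch (val (enum_val i)) (val (enum_val j)))%:R / Mn%:R.
  by rewrite /P /switch_mx mxE.
have Ppos i j : 0 <= P i j by rewrite Pij divr_ge0 // ?ler0n // ltW.
have [i Hi] := gersh wn0 Hw' Ppos.
set Gi := val (enum_val i).
have regGi : is_regdigraph n d Gi := valP (enum_val i).
set c := nswitch Gi Gi.
set s := (\sum_(j < #|{: Omega n d}|) nswitch Gi (val (enum_val j)))%N.
have c2 : (2 <= c)%N by apply: (@nswitch_self n d) => //; lia.
have sMn : (s <= Mn)%N.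
  have -> : s = (\sum_(H : Omega n d) nswitch Gi (val H))%N.
    by rewrite /s -(big_enum_val (fun H : Omega n d => nswitch Gi (val H))); apply: eq_bigl => H; rewrite inE.
  by apply: leq_trans (sum_nswitch d Gi) _; rewrite (card_G regGi).
have Hs : s = (c + \sum_(j < #|{: Omega n d}| | j != i) nswitch Gi (val (enum_val j)))%N.
  by rewrite /s (bigD1 i).
have Eoff : \sum_(j | j != i) P i j = (s - c)%N%:R / Mn%:R.
  rewrite Hs addKn natr_sum mulr_suml; apply: eq_bigr => j _; exact: Pij.
rewrite Pij -/Gi -/c Eoff in Hi.
have cs : (c <= s)%N by rewrite Hs leq_addr.
rewrite natrB // in Hi.
have key : 4%:R <= (1 + lam) * Mn%:R.
  have H1 : (c%:R - (s%:R - c%:R)) <= lam * Mn%:R.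
    by rewrite -(ler_pM2r MR) in Hi; move: Hi; rewrite mulrBl !mulfVK // ?gt_eqF.
  have c2R : (2 : R) <= c%:R by rewrite ler_nat.
  have sMR : s%:R <= Mn%:R :> R by rewrite ler_nat.
  rewrite mulrDl mul1r; lra.
have tpos : 0 < 1 + lam.
  rewrite -(pmulr_lgt0 _ MR); apply: lt_le_trans key; by rewrite ltr0n.
split => //.
have : (1 + lam)^-1 <= Mn%:R / 4%:R.
  rewrite ler_pdivlMr ?ltr0n // -[X in _ <= X](mulKf (lt0r_neq0 tpos)).
  rewrite ler_wpM2l // ?invr_ge0 ?ltW //.
move=> Hle; apply: le_trans Hle _; rewrite ler_pM2r ?invr_gt0 ?ltr0n // ler_nat /Mn.
rewrite -expnMn mulnC -/m expnS expn1 mulnC leq_mul2l leq_pred orbT.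
by []. Qed.
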